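(* Let $f\in C^{1,1}_L(\mathbb{R}^n)$, let $\mathcal{Y}=\{y_1,\dots,y_{n+1}\}\subset\mathbb{R}^n$ be affinely independent, let $m$ be the affine function interpolating $f$ on $\mathcal{Y}$, and let $y_0\in\mathbb{R}^n$ with barycentric coordinates $\ell_1,\dots,\ell_{n+1}$ and $\ell_0=-1$. Define $$w=\frac{\sum_{i=0}^{n+1}|\ell_i|\,y_i}{\sum_{i=0}^{n+1}|\ell_i|}.$$ Then $$|m(y_0)-f(y_0)|\le \frac{L}{2}\sum_{i=0}^{n+1}|\ell_i|\,\|y_i-w\|^2,$$ and $w$ minimizes $u\mapsto \frac{L}{2}\sum_{i=0}^{n+1}|\ell_i|\,\|y_i-u\|^2$ over $u\in\mathbb{R}^n$.
   Context: Let $n\ge1$ and $L>0$. $C^{1,1}_L(\mathbb{R}^n)$ denotes the set of differentiable functions $f:\mathbb{R}^n\to\mathbb{R}$ with $\|\nabla f(u_1)-\nabla f(u_2)\|\le L\|u_1-u_2\|$ for all $u_1,u_2\in\mathbb{R}^n$ (Euclidean norm). For an affinely independent set $\mathcal{Y}=\{y_1,\dots,y_{n+1}\}\subset\mathbb{R}^n$, the interpolating affine function $m$ is the unique affine $m:\mathbb{R}^n\to\mathbb{R}$ with $m(y_i)=f(y_i)$ for $i=1,\dots,n+1$. The barycentric coordinates of $y_0\in\mathbb{R}^n$ with respect to $\mathcal{Y}$ are the unique reals $\ell_1,\dots,\ell_{n+1}$ with $\sum_{i=1}^{n+1}\ell_i=1$ and $\sum_{i=1}^{n+1}\ell_iy_i=y_0$;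 one sets $\ell_0=-1$, so that $\sum_{i=0}^{n+1}\ell_i=0$, $\sum_{i=0}^{n+1}\ell_iy_i=0$, and $m(y_0)=\sum_{i=1}^{n+1}\ell_if(y_i)$. *)

(* Defs.v *)
From HB Require Import structures.
From mathcomp Require Import all_boot all_order all_algebra.
From mathcomp Require Import all_classical all_reals all_analysis.
Set Implicit Arguments. Unset Strict Implicit. Unset Printing Implicit Defensive.
Import Order.TTheory GRing.Theory Num.Theory.
Import numFieldNormedType.Exports.
Local Open Scope ring_scope.

Definition enorm {R : realType} {n : nat} (v : 'rV[R]_n) : R :=
  Num.sqrt (\sum_(j < n) v 0 j ^+ 2).

Definition grad {R : realType} {n : nat} (f : 'rV[R]_n -> R) (x : 'rV[R]_n) : 'rV[R]_n :=
  \row_(j < n) ('d f x (delta_mx 0 j : 'rV[R]_n) : R).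

Definition C11 {R : realType} {n : nat} (L : R) (f : 'rV[R]_n -> R) : Prop :=
  (forall x, differentiable f x) /\
  (forall u1 u2, enorm (grad f u1 - grad f u2) <= L * enorm (u1 - u2)).

Definition affinely_independent {R : realType} {n k : nat} (y : 'I_k -> 'rV[R]_n) : Prop :=
  forall c : 'I_k -> R, \sum_(i < k) c i = 0 -> \sum_(i < k) c i *: y i = 0 ->
  forall i, c i = 0.

Definition affine_fun {R : realType} {n : nat} (m : 'rV[R]_n -> R) : Prop :=
  exists (g : 'rV[R]_n) (c : R), forall x, m x = c + \sum_(j < n) g 0 j * x 0 j.

Definition barycentric {R : realType} {n k : nat} (y : 'I_k -> 'rV[R]_n)
  (y0 : 'rV[R]_n) (ell : 'I_k -> R) : Prop :=
  \sum_(i < k) ell i = 1 /\ \sum_(i < k) ell i *: y i = y0.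

(* Extended families indexed by 0..n+1: index 0 is y0 with ell_0 = -1. *)
Definition extY {R : realType} {n k : nat} (y0 : 'rV[R]_n) (y : 'I_k -> 'rV[R]_n)
  (i : 'I_k.+1) : 'rV[R]_n :=
  match unlift ord0 i with None => y0 | Some j => y j end.

Definition extL {R : realType} {k : nat} (ell : 'I_k -> R) (i : 'I_k.+1) : R :=
  match unlift ord0 i with None => -1 | Some j => ell j end.

Definition wpt {R : realType} {n k : nat} (y0 : 'rV[R]_n) (y : 'I_k -> 'rV[R]_n)
  (ell : 'I_k -> R) : 'rV[R]_n :=
  (\sum_(i < k.+1) `|extL ell i|)^-1 *: \sum_(i < k.+1) `|extL ell i| *: extY y0 y i.

Definition Phi {R : realType} {n k : nat} (L : R) (y0 : 'rV[R]_n) (y : 'I_k -> 'rV[R]_n)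
  (ell : 'I_k -> R) (u : 'rV[R]_n) : R :=
  L / 2 * \sum_(i < k.+1) `|extL ell i| * enorm (extY y0 y i - u) ^+ 2.

(* Main.v *)
Require Import Defs.
From HB Require Import structures.
From mathcomp Require Import all_boot all_order all_algebra.
From mathcomp Require Import all_classical all_reals all_analysis.
From mathcomp Require Import ring lra.
Import Order.TTheory GRing.Theory Num.Theory.
Import numFieldNormedType.Exports.
Local Open Scope classical_set_scope.
Local Open Scope ring_scope.

Section CS.
Variable R : realType.

Lemma lagrange (n : nat) (a b : 'I_n -> R) :
  (\sum_i a i * b i) ^+ 2 <= (\sum_i a i ^+ 2) * (\sum_i b i ^+ 2).
Proof.
have H : 0 <= \sum_i \sum_j (a i * b j - a j * b i) ^+ 2.
  by apply: sumr_ge0 => i _; apply: sumr_ge0 => j _; apply: sqr_ge0.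
have E : \sum_i \sum_j (a i * b j - a j * b i) ^+ 2 =
   2 * ((\sum_i a i ^+ 2) * (\sum_i b i ^+ 2) - (\sum_i a i * b i) ^+ 2).
  have E1 : (\sum_i a i ^+ 2) * (\sum_i b i ^+ 2) = \sum_i \sum_j (a i ^+2 * b j ^+ 2).
    by rewrite mulr_suml; apply: eq_bigr => i _; rewrite mulr_sumr.
  have E2 : (\sum_i a i * b i) ^+ 2 = \sum_i \sum_j (a i * b i * (a j * b j)).
    by rewrite expr2 mulr_suml; apply: eq_bigr => i _; rewrite mulr_sumr.
  have E3 : \sum_i \sum_j (a i ^+2 * b j ^+ 2) = \sum_i \sum_j (a j ^+2 * b i ^+ 2).
    by rewrite exchange_big.
  rewrite E1 E2.
  have HH : forall X X' Y : R, X = X' -> 2 * (X - Y) = X + X' - 2 * Y.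
    by move=> X X' Y ->; ring.
  rewrite (HH _ _ _ E3).
  rewrite mulr_sumr -big_split -sumrB /=; apply: eq_bigr => i _.
  rewrite mulr_sumr -big_split -sumrB /=; apply: eq_bigr => j _.
  ring.
have : 0 <= (\sum_i a i ^+ 2) * (\sum_i b i ^+ 2) - (\sum_i a i * b i) ^+ 2.
  by move: H; rewrite E; rewrite pmulr_rge0.
by rewrite subr_ge0.
Qed.

Lemma cs (n : nat) (a b : 'I_n -> R) :
  `|\sum_i a i * b i| <= Num.sqrt (\sum_i a i ^+ 2) * Num.sqrt (\sum_i b i ^+ 2).
Proof.
rewrite -sqrtrM; last by apply: sumr_ge0 => i _; apply: sqr_ge0.
rewrite -sqrtr_sqr ler_sqrt; first exact: lagrange.
by apply: mulr_ge0; apply: sumr_ge0 => i _; apply: sqr_ge0.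
Qed.
End CS.

Section T.
Variable R : realType.
Variable n : nat.
Implicit Types (f : 'rV[R]_n -> R) (u v x : 'rV[R]_n).

Lemma dgrad f x v : 'd f x v = \sum_j v 0 j * grad f x 0 j.
Proof.
rewrite {1}[v]row_sum_delta linear_sum; apply: eq_bigr => j _.
by rewrite linearZ /grad mxE.
Qed.

Lemma enorm2 v : enorm v ^+ 2 = \sum_j v 0 j ^+ 2.
Proof. by rewrite /enorm sqr_sqrtr //; apply: sumr_ge0 => i _; apply: sqr_ge0. Qed.

Lemma enormZ (t : R) v : enorm (t *: v) = `|t| * enorm v.
Proof.
rewrite /enorm -sqrtr_sqr -sqrtrM ?sqr_ge0 // mulr_sumr; congr Num.sqrt.
by apply: eq_bigr => j _; rewrite mxE exprMn.
Qed.

Lemma line_derive f u d t : differentiable f (u + t *: d) ->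
  is_derive t (1:R) (fun s : R => f (u + s *: d)) ('d f (u + t *: d) d).
Proof.
move=> df.
have key : (fun h : R => h^-1 *: (((fun s : R => f (u + s *: d)) \o shift t) (h *: 1) - f (u + t *: d))) =
   (fun h => h^-1 *: ((f \o shift (u + t *: d)) (h *: d) - f (u + t *: d))).
  apply: funext => h /=; congr (_ *: (_ - _)); congr f.
  by rewrite [_%:A]mulr1 scalerDl addrCA addrA.
apply: DeriveDef.
  by rewrite /derivable key; exact: diff_derivable.
by rewrite /derive key -/(derive f _ d) deriveE.
Qed.

Lemma csdiff (a b d : 'rV[R]_n) :
  `|\sum_j d 0 j * a 0 j - \sum_j d 0 j * b 0 j| <= enorm d * enorm (a - b).
Proof.
rewrite -sumrB.
have -> : \sum_j (d 0 j * a 0 j - d 0 j * b 0 j) = \sum_j d 0 j * (a - b) 0 j.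
  by apply: eq_bigr => j _; rewrite !mxE mulrBr.
exact: cs.
Qed.

Lemma dlip f L (hf : C11 L f) x u (d : 'rV[R]_n) :
  `|'d f x d - 'd f u d| <= enorm d * (L * enorm (x - u)).
Proof.
have E1 := dgrad f x d. have E2 := dgrad f u d. have H := hf.2 x u.
revert E1 E2 H. generalize ('d f x d) as a. generalize ('d f u d) as b.
generalize (grad f x) as g1. generalize (grad f u) as g2.
intros g2 g1 b a -> -> H.
apply: le_trans (csdiff _ _ _) _.
by apply: ler_wpM2l; first exact: sqrtr_ge0.
Qed.

Lemma oned (F D : R -> R) (s K c0 : R) :
  (forall t, is_derive t (1:R) F (D t)) ->
  (forall t, 0 <= t -> s * (D t - c0) <= K * t) ->
  s * (F 1 - F 0 - c0) <= K / 2.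
Proof.
move=> dF hD.
pose h := (s \*: (F - c0 \*: (@id R))) - (K / 2) \*: ((@id R) ^+ 2).
have dh : forall t, is_derive t (1:R) h (s * (D t - c0) - K * t).
  move=> t.
  have H1 := is_deriveB (dF t) (is_deriveZ c0 (is_derive_id t (1:R))).
  have H2 := is_deriveZ s H1.
  have H3 := is_deriveZ (K/2) (is_deriveX 2 (is_derive_id t (1:R))).
  apply: is_derive_eq (is_deriveB H2 H3) _.
  change (s * (D t - c0 * 1) - K / 2 * ((2 * t ^+ 1) * 1) = s * (D t - c0) - K * t).
  by rewrite expr1; field.
have e : h 1 - h 0 = s * (F 1 - F 0 - c0) - K / 2.
  change (s * (F 1 - c0 * 1) - K / 2 * (1 ^+ 2) - (s * (F 0 - c0 * 0) - K / 2 * (0 ^+ 2))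
     = s * (F 1 - F 0 - c0) - K / 2).
  by rewrite expr1n expr0n /=; ring.
have hc : {within `[0, 1], continuous h}.
  apply: derivable_within_continuous => t _.
  by case: (dh t).
have [c c01 hmvt] := MVT (ltr01 : (0:R) < 1) (fun r _ => dh r) hc.
rewrite -subr_le0 -e hmvt subr0 mulr1 subr_le0.
apply: hD; move: c01; rewrite in_itv /= => /andP[/ltW ? _] //.
Qed.
Lemma aux (s a b e L t : R) : `|s| <= 1 -> `|a - b| <= e * (L * (t * e)) ->
  s * (a - b) <= L * e ^+ 2 * t.
Proof.
move=> hs H.
apply: le_trans (ler_norm _) _; rewrite normrM.
apply: le_trans (ler_piMl (normr_ge0 _) hs) _.
apply: le_trans H _.
by rewrite le_eqVlt; apply/orP; left; apply/eqP; ring.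
Qed.

Lemma taylor f L (hf : C11 L f) u y :
  `|f y - f u - 'd f u (y - u)| <= L / 2 * enorm (y - u) ^+ 2.
Proof.
have Hs : forall s, `|s| <= 1 ->
    s * (f y - f u - 'd f u (y - u)) <= L / 2 * enorm (y - u) ^+ 2.
  move=> s hs.
  have := @oned (fun t => f (u + t *: (y - u))) (fun t => 'd f (u + t *: (y - u)) (y - u))
     s (L * enorm (y - u) ^+ 2) ('d f u (y - u)).
  move=> H; move: H => /(_ _ _).
  have H1 : forall t : R, is_derive t (1:R) (fun t => f (u + t *: (y - u)))
           ((fun t => 'd f (u + t *: (y - u)) (y - u)) t).
    by move=> t; exact: line_derive (hf.1 _).
  move=> /(_ H1) {H1}.
  have H2 : forall t : R, 0 <= t -> s * ((fun t => 'd f (u + t *: (y - u)) (y - u)) t - 'd f u (y - u))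
        <= L * enorm (y - u) ^+ 2 * t.
    move=> t t0 /=.
    have H := @dlip f L hf (u + t *: (y - u)) u (y - u).
    have E : u + t *: (y - u) - u = t *: (y - u) by rewrite addrC addKr.
    rewrite E enormZ (ger0_norm t0) in H.
    exact: aux hs H.
  move=> /(_ H2) {H2}.
  rewrite scale1r scale0r addr0 (addrC u (y - u)) subrK.
  move=> H; apply: le_trans H _.
  by rewrite le_eqVlt; apply/orP; left; apply/eqP; ring.
have h1 := Hs 1; have h2 := Hs (-1).
rewrite normr1 lexx mul1r in h1; rewrite normrN normr1 lexx mulN1r in h2.
have {}h1 := h1 isT; have {}h2 := h2 isT.
revert h1 h2. generalize ('d f u (y - u)) as c. intros c h1 h2.
rewrite ler_norml; apply/andP; split; lra.
Qed.
Lemma combine (l : {linear 'rV[R]_n -> R}) (k : nat) (c : 'I_k -> R)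
  (Y : 'I_k -> 'rV[R]_n) f w :
  \sum_i c i = 0 -> \sum_i c i *: Y i = 0 ->
  \sum_i c i * f (Y i) = \sum_i c i * (f (Y i) - f w - l (Y i - w)).
Proof.
move=> h0 h1.
have : \sum_i c i * (f w + l (Y i - w)) = 0.
  under eq_bigr do rewrite mulrDr.
  rewrite big_split /= -mulr_suml h0 mul0r add0r.
  have -> : \sum_i c i * l (Y i - w) = l (\sum_i c i *: (Y i - w)).
    by rewrite linear_sum; apply: eq_bigr => i _; rewrite linearZ.
  have -> : \sum_i c i *: (Y i - w) = 0.
    rewrite (eq_bigr (fun i => c i *: Y i - c i *: w)); last by move=> i _; rewrite scalerBr.
    by rewrite sumrB h1 -scaler_suml h0 scale0r subrr.
  by rewrite linear0.
move=> H; transitivity (\sum_i c i * f (Y i) - \sum_i c i * (f w + l (Y i - w))).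
  by rewrite H subr0.
rewrite -sumrB; apply: eq_bigr => i _.
ring.
Qed.

Lemma part1 f L (hf : C11 L f) (k : nat) (c : 'I_k -> R) (Y : 'I_k -> 'rV[R]_n) w :
  \sum_i c i = 0 -> \sum_i c i *: Y i = 0 ->
  `|\sum_i c i * f (Y i)| <= L / 2 * \sum_i `|c i| * enorm (Y i - w) ^+ 2.
Proof.
move=> h0 h1; rewrite (@combine ('d f w) k c Y f w h0 h1).
apply: le_trans (ler_norm_sum _ _ _) _.
rewrite mulr_sumr; apply: ler_sum => i _.
rewrite normrM mulrCA; apply: ler_wpM2l; first exact: normr_ge0.
exact: taylor.
Qed.

Lemma wmin (k : nat) (a : 'I_k -> R) (Y : 'I_k -> 'rV[R]_n) u :
  (forall i, 0 <= a i) -> 0 < \sum_i a i ->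
  \sum_i a i * enorm (Y i - (\sum_i a i)^-1 *: \sum_i a i *: Y i) ^+ 2
  <= \sum_i a i * enorm (Y i - u) ^+ 2.
Proof.
move=> ha hA.
set A := \sum_i a i.
set w := A^-1 *: _.
have Sx : forall j, \sum_i a i * Y i 0 j = A * w 0 j.
  move=> j; rewrite /w mxE summxE mulVKf ?gt_eqF //.
  by apply: eq_bigr => i _; rewrite mxE.
clearbody w.
under eq_bigr do rewrite enorm2 mulr_sumr.
under [X in _ <= X]eq_bigr do rewrite enorm2 mulr_sumr.
rewrite exchange_big [X in _ <= X]exchange_big /=.
apply: ler_sum => j _.
set p := w 0 j; set q := u 0 j.
have E : \sum_i a i * (Y i - u) 0 j ^+ 2 = \sum_i a i * (Y i - w) 0 j ^+ 2 +
     ((p - q) * 2 * \sum_i a i * Y i 0 j - (p - q) * (p + q) * A).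
  rewrite !mulr_sumr -sumrB -big_split; apply: eq_bigr => i _ /=.
  rewrite !mxE /p /q.
  ring.
rewrite E Sx -/p lerDl.
have -> : (p - q) * 2 * (A * p) - (p - q) * (p + q) * A = A * (p - q) ^+ 2 by ring.
by apply: mulr_ge0; [exact: ltW | exact: sqr_ge0].
Qed.
End T.

Theorem corollary3p2 (R : realType) (n : nat) (L : R) (f : 'rV[R]_n -> R)
  (y : 'I_n.+1 -> 'rV[R]_n) (m : 'rV[R]_n -> R) (y0 : 'rV[R]_n) (ell : 'I_n.+1 -> R) :
  (1 <= n)%N -> 0 < L -> C11 L f ->
  affinely_independent y ->
  affine_fun m -> (forall i, m (y i) = f (y i)) ->
  barycentric y y0 ell ->
  `|m y0 - f y0| <= Phi L y0 y ell (wpt y0 y ell) /\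
  (forall u : 'rV[R]_n, Phi L y0 y ell (wpt y0 y ell) <= Phi L y0 y ell u).
Proof.
move=> hn L0 hf hind [g [c hm]] hmy [hl1 hl2].
have eL0 : extL ell ord0 = -1 by rewrite /extL unlift_none.
have eLs : forall i, extL ell (lift ord0 i) = ell i by move=> i; rewrite /extL liftK.
have eY0 : extY y0 y ord0 = y0 by rewrite /extY unlift_none.
have eYs : forall i, extY y0 y (lift ord0 i) = y i by move=> i; rewrite /extY liftK.
have s0 : \sum_i extL ell i = 0.
  rewrite big_ord_recl eL0; under eq_bigr do rewrite eLs.
  by rewrite hl1 addNr.
have s1 : \sum_i extL ell i *: extY y0 y i = 0.
  rewrite big_ord_recl eL0 eY0; under eq_bigr do rewrite eLs eYs.
  by rewrite hl2 scaleN1r addNr.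
have em : m y0 - f y0 = \sum_i extL ell i * f (extY y0 y i).
  rewrite big_ord_recl eL0 eY0; under eq_bigr do rewrite eLs eYs.
  have -> : \sum_i ell i * f (y i) = m y0.
    under eq_bigr do rewrite -hmy hm mulrDr mulr_sumr.
    rewrite big_split /= -mulr_suml hl1 mul1r exchange_big /= hm -hl2.
    congr (_ + _); apply: eq_bigr => j _.
    rewrite summxE mulr_sumr; apply: eq_bigr => i _; rewrite mxE; ring.
  by rewrite mulN1r addrC.
split.
  rewrite em /Phi; exact: (@part1 R n f L hf _ _ _ _ s0 s1).
move=> u; rewrite /Phi; apply: ler_wpM2l.
  by apply: divr_ge0; [exact: ltW | exact: ler0n].
rewrite /wpt; apply: wmin; first by move=> i; exact: normr_ge0.
apply: (lt_le_trans ltr01).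
rewrite big_ord_recl eL0 normrN normr1 lerDl.
by apply: sumr_ge0 => i _; exact: normr_ge0.
Qed.
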